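(* Let $K=2^m$ with $m\in\mathbb{N}$ and let $\Phi$ be the $K\times K$ Sylvester Hadamard matrix. Among all matrices of the form $Z=\Phi\,\mathrm{diag}(0,a)\,\Phi^T\in\mathbb{R}^{K\times K}$ with $a\in\mathbb{R}^{K-1}_{\ge0}$ satisfying $Z_{cc}-Z_{c'c}>0$ for all $c'\neq c$, the minimum possible rank is exactly $m=\log_2K$.
   Context: Sylvester Hadamard matrices: $\Phi_1=(1)$, $\Phi_{2^m}=\begin{bmatrix}\Phi_{2^{m-1}}&\Phi_{2^{m-1}}\\ \Phi_{2^{m-1}}&-\Phi_{2^{m-1}}\end{bmatrix}$. $\mathrm{diag}(0,a)$ is the $K\times K$ diagonal matrix with diagonal $(0,a_1,\dots,a_{K-1})$. *)

(* Defs.v *)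
From HB Require Import structures.
From mathcomp Require Import all_boot all_order all_algebra.
From mathcomp Require Import reals.
Set Implicit Arguments. Unset Strict Implicit. Unset Printing Implicit Defensive.
Import Order.TTheory GRing.Theory Num.Theory.
Local Open Scope ring_scope.

Lemma expn2_double (m : nat) : (2 ^ m + 2 ^ m)%N = (2 ^ m.+1)%N.
Proof. by rewrite addnn -mul2n -expnS. Qed.

Fixpoint sylvester (R : pzRingType) (m : nat) : 'M[R]_(2 ^ m) :=
  match m return 'M[R]_(2 ^ m) with
  | 0 => 1%:M
  | m'.+1 =>
      let H := sylvester R m' in
      castmx (expn2_double m', expn2_double m') (block_mx H H H (- H))
  end.

Lemma one_add_pred_pow2 (m : nat) : (1 + (2 ^ m).-1)%N = (2 ^ m)%N.
Proof. by rewrite add1n prednK // expn_gt0. Qed.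

Definition diag0 (R : pzRingType) (m : nat) (a : 'rV[R]_((2 ^ m).-1)) : 'M[R]_(2 ^ m) :=
  diag_mx (castmx (erefl 1%N, one_add_pred_pow2 m) (row_mx (0 : 'rV[R]_1) a)).

Definition Zmat (R : pzRingType) (m : nat) (a : 'rV[R]_((2 ^ m).-1)) : 'M[R]_(2 ^ m) :=
  sylvester R m *m diag0 a *m (sylvester R m)^T.

(* Main.v *)
Require Import Defs.
From HB Require Import structures.
From mathcomp Require Import all_boot all_order all_algebra.
From mathcomp Require Import reals zify ring lra.
Import Order.TTheory GRing.Theory Num.Theory.
Local Open Scope ring_scope.

Definition rd (m c : nat) : nat := if (2 ^ m <= c)%N then (c - 2 ^ m)%N else c.
Fixpoint sgn (m c j : nat) : bool :=
  if m is m'.+1 then ((2 ^ m' <= c)%N && (2 ^ m' <= j)%N) (+) sgn m' (rd m' c) (rd m' j)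
  else false.

Lemma sgn_r0 m c : sgn m c 0 = false.
Proof.
elim: m c => [|m IH] c //=.
have -> : (2 ^ m <= 0)%N = false by rewrite leqNgt expn_gt0.
by rewrite andbF /rd /= (_ : (2 ^ m <= 0)%N = false) ?IH // leqNgt expn_gt0.
Qed.

Lemma sep m c c' : (c < 2 ^ m)%N -> (c' < 2 ^ m)%N -> c != c' ->
  exists2 i, (i < m)%N & sgn m c (2 ^ i) != sgn m c' (2 ^ i).
Proof.
elim: m c c' => [|m IH] c c'.
  by rewrite expn0 !ltnS !leqn0 => /eqP-> /eqP->.
rewrite expnS => hc hc' ne.
have hp := expn_gt0 2 m.
have rdi i : (i < m)%N -> rd m (2 ^ i) = (2 ^ i)%N.
  by move=> lt; rewrite /rd leqNgt ltn_exp2l ?lt.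
have low i (x : nat) : (i < m)%N -> sgn m.+1 x (2 ^ i) = sgn m (rd m x) (2 ^ i).
  move=> lt /=; rewrite rdi // (_ : (2 ^ m <= 2 ^ i)%N = false) ?andbF //.
  by rewrite leqNgt ltn_exp2l ?lt.
have top (x : nat) : sgn m.+1 x (2 ^ m) = (2 ^ m <= x)%N.
  by rewrite /= leqnn andbT /rd leqnn subnn sgn_r0 addbF.
case E: ((2 ^ m <= c)%N == (2 ^ m <= c')%N).
  have rdlt x : (x < 2 * 2 ^ m)%N -> (rd m x < 2 ^ m)%N.
    move=> hx; rewrite /rd; case: (leqP (2 ^ m) x) => h; move: hx h; move: (2 ^ m)%N => K; lia.
  have hr : rd m c != rd m c'.
    move: E ne; rewrite /rd; case: (leqP (2 ^ m) c); case: (leqP (2 ^ m) c') => h1 h2 h3 h4; move: h1 h2 h3 h4; move: (2 ^ m)%N => K; lia.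
  have [i lt H] := IH (rd m c) (rd m c') (rdlt _ hc) (rdlt _ hc') hr.
  by exists i; [exact: ltnW|rewrite !low].
by exists m => //; rewrite !top E.
Qed.

Lemma rank_diag (F : fieldType) n (d : 'rV[F]_n) :
  \rank (diag_mx d) = (\sum_(j < n) (d ord0 j != 0%R))%N.
Proof.
elim: n d => [|n IH] d.
  by rewrite big_ord0 flatmx0 mxrank0.
have -> : diag_mx d = diag_mx (row_mx (lsubmx (d : 'rV_(1 + n))) (rsubmx (d : 'rV_(1 + n)))).
  by rewrite hsubmxK.
rewrite diag_mx_row; etransitivity; first exact (@rank_diag_block_mx F 1 1 n n (diag_mx (@lsubmx _ 1 1 n d)) (diag_mx (@rsubmx _ 1 1 n d))).
rewrite IH big_ord_recl.
congr (_ + _)%N; last first.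
  apply: eq_bigr => j _; rewrite mxE; congr (negb (_ == _)); congr (d _ _); exact: val_inj.
rewrite rank_rV; congr (negb _); apply/eqP/eqP => [/matrixP/(_ ord0 ord0)|].
  rewrite !mxE eqxx mulr1n; move=> h; rewrite -h; congr (d _ _); exact: val_inj.
move=> h; apply/matrixP => i j; rewrite !ord1 !mxE eqxx mulr1n.
by rewrite (_ : lshift n ord0 = ord0) ?h //; apply: val_inj.
Qed.
Lemma ord_split_cases n1 n2 (P : 'I_(n1 + n2) -> Type) :
  (forall k : 'I_n1, P (lshift n2 k)) -> (forall k : 'I_n2, P (rshift n1 k)) -> forall i, P i.
Proof. by move=> H1 H2 i; rewrite -(splitK i); case: (split i). Qed.

Lemma sylvE (R : pzRingType) m (c j : 'I_(2 ^ m)) :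
  sylvester R m c j = (-1) ^+ sgn m c j.
Proof.
elim: m c j => [|m IH] c j.
  by rewrite /= !ord1 mxE eqxx.
rewrite [sylvester _ _]/= castmxE.
set c' := cast_ord _ c; set j' := cast_ord _ j.
have -> : (c : nat) = c' by [].
have -> : (j : nat) = j' by [].
clearbody c' j'.
elim/ord_split_cases: c' => k.
all: elim/ord_split_cases: j' => l.
- have hk : (2 ^ m <= k)%N = false by rewrite leqNgt ltn_ord.
  have hl : (2 ^ m <= l)%N = false by rewrite leqNgt ltn_ord.
  by rewrite block_mxEul IH [sgn _.+1 _ _]/= /rd hk hl.
- have hk : (2 ^ m <= k)%N = false by rewrite leqNgt ltn_ord.
  by rewrite block_mxEur IH [sgn _.+1 _ _]/= /rd hk leq_addr addKn.
- have hl : (2 ^ m <= l)%N = false by rewrite leqNgt ltn_ord.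
  by rewrite block_mxEdl IH [sgn _.+1 _ _]/= /rd hl leq_addr addKn andbF.
- rewrite block_mxEdr mxE IH [sgn _.+1 _ _]/= /rd !leq_addr !addKn /=.
  by case: (sgn m k l); rewrite ?expr0 ?expr1 ?opprK.
Qed.
Lemma castmx_tr_mul (R : pzRingType) n1 n2 (e : n1 = n2) (A : 'M[R]_n1) :
  castmx (e, e) A *m (castmx (e, e) A)^T = castmx (e, e) (A *m A^T).
Proof. by case: n2 / e; rewrite !castmx_id. Qed.
Lemma castmx_scalar (R : pzRingType) n1 n2 (e : n1 = n2) (a : R) :
  castmx (e, e) (a%:M) = a%:M.
Proof. by case: n2 / e; rewrite !castmx_id. Qed.
Lemma sylv_orth (R : pzRingType) m :
  sylvester R m *m (sylvester R m)^T = (2 ^ m)%:R%:M.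
Proof.
elim: m => [|m IH]; first by rewrite /= trmx1 mulmx1.
rewrite [sylvester _ m.+1]/= castmx_tr_mul tr_block_mx mulmx_block.
rewrite linearN /= mulmxN mulNmx mulNmx mulmxN opprK IH subrr.
rewrite -(raddfD (@scalar_mx _ _)) -natrD -scalar_mx_block castmx_scalar.
by rewrite expn2_double. Qed.

Section Main.
Variable R : realType.
Variable m : nat.
Implicit Types a : 'rV[R]_((2 ^ m).-1).

Local Notation Phi := (sylvester R m).

Lemma sylv_unit : Phi \in unitmx.
Proof.
rewrite unitmxE unitfE; have := congr1 determinant (sylv_orth R m).
rewrite det_mulmx det_tr det_scalar => h; apply/eqP => h0; move: h.
rewrite h0 mul0r => /esym/eqP; rewrite expf_eq0 pnatr_eq0 expn_eq0 /=.
by rewrite expn_gt0.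
Qed.

Lemma rankZ a : \rank (Zmat a) = (\sum_(j < 2 ^ m) (diag0 a j j != 0%R))%N.
Proof.
rewrite /Zmat mxrankMfree ?row_free_unit ?unitmx_tr ?sylv_unit //.
rewrite -mxrank_tr trmx_mul mxrankMfree ?row_free_unit ?unitmx_tr ?sylv_unit //.
rewrite mxrank_tr /diag0 rank_diag; apply: eq_bigr => j _.
by rewrite [in RHS]mxE eqxx mulr1n.
Qed.

Lemma Zentry a c c' : Zmat a c c' = \sum_j diag0 a j j * (Phi c j * Phi c' j).
Proof.
rewrite /Zmat {1}/diag0 mul_mx_diag !mxE; apply: eq_bigr => j _.
rewrite mxE [(_^T) _ _]mxE /diag0 [diag_mx _ _ _]mxE eqxx mulr1n.
ring.
Qed.

Lemma Zdiff a c c' : Zmat a c c - Zmat a c' c =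
  \sum_j diag0 a j j * (if sgn m c j == sgn m c' j then 0 else 2).
Proof.
rewrite !Zentry -sumrB; apply: eq_bigr => j _; rewrite !sylvE -mulrBr; congr (_ * _).
by case: (sgn m c j); case: (sgn m c' j); rewrite /= ?expr0 ?expr1; ring.
Qed.

Lemma d_ge0 a : (forall j, 0 <= a 0 j) -> forall j, 0 <= diag0 a j j.
Proof.
move=> ha j; rewrite /diag0 mxE eqxx mulr1n castmxE /=.
move: (cast_ord _ j) (cast_ord _ ord0) => k i; rewrite ord1.
elim/ord_split_cases: k => k; first by rewrite row_mxEl mxE.
by rewrite row_mxEr.
Qed.

Lemma lower a : (forall j, 0 <= a 0 j) ->
  (forall c c' : 'I_(2 ^ m), c' != c -> Zmat a c c - Zmat a c' c > 0) ->
  (m <= \rank (Zmat a))%N.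
Proof.
move=> ha hZ; rewrite rankZ.
set S := [set j : 'I_(2 ^ m) | diag0 a j j != 0].
have -> : (\sum_(j < 2 ^ m) (diag0 a j j != 0%R))%N = #|S|.
  rewrite -sum1_card [in RHS]big_mkcond /=; apply: eq_bigr => j _; rewrite inE.
  by case: (_ != _).
pose g (c : 'I_(2 ^ m)) := [set j in S | sgn m c j].
have ginj : injective g.
  move=> c c' eg; apply/eqP/negPn/negP => ne.
  have := hZ c c'; rewrite eq_sym ne => /(_ isT).
  rewrite Zdiff big1 ?ltxx // => j _.
  case: (boolP (diag0 a j j != 0)) => jS.
    have : (j \in g c) = (j \in g c') by rewrite eg.
    by rewrite !inE jS /= => ->; rewrite eqxx mulr0.
  by move: jS; rewrite negbK => /eqP ->; rewrite mul0r.
have := card_imset [set: 'I_(2 ^ m)] ginj; rewrite cardsT card_ord => hc.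
have sub : g @: [set: 'I_(2 ^ m)] \subset powerset S.
  apply/subsetP => X /imsetP [c _ ->]; rewrite powersetE.
  by apply/subsetP => j; rewrite inE => /andP[].
have := subset_leq_card sub; rewrite hc card_powerset leq_exp2l //.
Qed.

Definition is_pow2 (j : nat) := [exists i : 'I_m, j == (2 ^ i)%N].

Definition a0 : 'rV[R]_((2 ^ m).-1) := \row_(j < (2 ^ m).-1) (if is_pow2 j.+1 then 1 else 0).

Lemma a0E j : diag0 a0 j j = if is_pow2 j then 1 else 0.
Proof.
rewrite /diag0 mxE eqxx mulr1n castmxE /=.
have -> : (j : nat) = cast_ord (esym (one_add_pred_pow2 m)) j by [].
move: (cast_ord _ j) (cast_ord _ ord0) => k i; rewrite ord1.
elim/ord_split_cases: k => k; last by rewrite row_mxEr mxE.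
rewrite row_mxEl mxE /= ord1 /=.
case: ifP => // /existsP [i' /eqP h].
by have := expn_gt0 2 i'; rewrite -h.
Qed.

Lemma pow_lt (i : 'I_m) : (2 ^ i < 2 ^ m)%N.
Proof. by rewrite ltn_exp2l. Qed.

Lemma a0_ok : (forall j, 0 <= a0 0 j) /\
      (forall c c' : 'I_(2 ^ m), c' != c -> Zmat a0 c c - Zmat a0 c' c > 0).
Proof.
split; first by move=> j; rewrite mxE; case: ifP.
move=> c c' ne.
have [i lti hi] := @sep m c c' (ltn_ord c) (ltn_ord c') ltac:(by rewrite eq_sym; exact: ne).
pose j0 : 'I_(2 ^ m) := Ordinal (pow_lt (Ordinal lti)).
rewrite Zdiff (bigD1 j0) //= a0E.
have -> : is_pow2 (2 ^ i) by apply/existsP; exists (Ordinal lti).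
rewrite (negPf hi).
have : 0 <= \sum_(j < 2 ^ m | j != j0) diag0 a0 j j * (if sgn m c j == sgn m c' j then 0 else 2).
  apply: sumr_ge0 => j _; apply: mulr_ge0; first by rewrite a0E; case: ifP.
  by case: ifP.
lra.
Qed.

Lemma a0_rank : (\rank (Zmat a0) <= m)%N.
Proof.
rewrite rankZ.
set P := [set j : 'I_(2 ^ m) | is_pow2 j].
have -> : (\sum_(j < 2 ^ m) (diag0 a0 j j != 0%R))%N = #|P|.
  rewrite -sum1_card [in RHS]big_mkcond /=; apply: eq_bigr => j _; rewrite inE a0E.
  by case: ifP; rewrite ?oner_eq0 ?eqxx.
pose f (i : 'I_m) : 'I_(2 ^ m) := Ordinal (pow_lt i).
have sub : P \subset f @: [set: 'I_m].
  apply/subsetP => j; rewrite inE => /existsP [i /eqP h].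
  by apply/imsetP; exists i => //; apply: val_inj.
apply: (leq_trans (subset_leq_card sub)).
by apply: (leq_trans (leq_imset_card _ _)); rewrite cardsT card_ord.
Qed.

End Main.

Theorem propositionC1 (R : realType) (m : nat) :
  (exists a : 'rV[R]_((2 ^ m).-1),
      (forall j, 0 <= a 0 j) /\
      (forall c c' : 'I_(2 ^ m), c' != c -> Zmat a c c - Zmat a c' c > 0) /\
      \rank (Zmat a) = m)
  /\
  (forall a : 'rV[R]_((2 ^ m).-1),
      (forall j, 0 <= a 0 j) ->
      (forall c c' : 'I_(2 ^ m), c' != c -> Zmat a c c - Zmat a c' c > 0) ->
      (m <= \rank (Zmat a))%N).
Proof.
split; last exact: lower.
have [h1 h2] := a0_ok R m.
exists (a0 R m); split => //; split => //.
by apply/eqP; rewrite eqn_leq a0_rank lower.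
Qed.
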